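(* Let $n>2$, $V=\mathbb{F}_2^n$, and let $W\le V$ with $\dim(W)=n-2$. Let $\phi\in\mathrm{Sym}(V)$ be an involution centralising $\sigma_W$ and such that $\phi$ maps no coset of $W$ in $V$ to itself. Then $\phi\in\mathrm{AGL}(V)$.
   Context: For $v\in V$, $\sigma_v:x\mapsto x+v$, and $\sigma_W=\{\sigma_w:w\in W\}$. Any permutation centralising $\sigma_W$ permutes the cosets of $W$. $\mathrm{AGL}(V)$ is the affine group of maps $x\mapsto xL+v$, $L\in\mathrm{GL}(V)$, $v\in V$. *)

(* Defs.v *)
From HB Require Import structures.
From mathcomp Require Import all_boot all_order all_algebra all_fingroup.
Set Implicit Arguments. Unset Strict Implicit. Unset Printing Implicit Defensive.
Import GRing.Theory.
Local Open Scope ring_scope.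

(* V = F_2^n is modelled as row vectors 'rV['F_2]_n. *)

Definition wcoset (n : nat) (W : {vspace 'rV['F_2]_n}) (x : 'rV['F_2]_n)
  : {set 'rV['F_2]_n} := [set y | y - x \in W].

(* phi centralises sigma_W = { x |-> x + w : w in W }. *)
Definition centralises_transl (n : nat) (W : {vspace 'rV['F_2]_n})
  (phi : {perm 'rV['F_2]_n}) : Prop :=
  forall w, w \in W -> forall x, phi (x + w) = phi x + w.

Definition in_AGL (n : nat) (phi : {perm 'rV['F_2]_n}) : Prop :=
  exists L : 'M['F_2]_n, exists v : 'rV['F_2]_n,
    L \in unitmx /\ forall x, phi x = x *m L + v.

(* Main.v *)
Require Import Defs.
From HB Require Import structures.
From mathcomp Require Import all_boot all_order all_algebra all_fingroup.
From mathcomp Require Import zify.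
Set Implicit Arguments. Unset Strict Implicit. Unset Printing Implicit Defensive.
Import GRing.Theory.
Local Open Scope ring_scope.

Lemma F2cases (c : 'F_2) : c = 0 \/ c = 1.
Proof. case: c => m Hm; have : (m < 2)%N by exact: Hm.
case: m Hm => [|[|k]] Hm // _; [left|right]; exact: val_inj. Qed.

Lemma addxx n (x : 'rV['F_2]_n) : x + x = 0.
Proof.
have h: (1 + 1 : 'F_2) = 0 by apply: val_inj.
by rewrite -{1 2}[x]scale1r -scalerDl h scale0r. Qed.

Lemma oppF2 n (x : 'rV['F_2]_n) : - x = x.
Proof. by apply/eqP; rewrite eq_sym -subr_eq0 opprK addxx. Qed.

Lemma dim_lt_line n (U : {vspace 'rV['F_2]_n}) v : v \notin U -> (\dim U < \dim (U + <[v]>))%N.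
Proof.
move=> vU; rewrite ltn_neqAle (dimv_leqif_sup (addvSl U <[v]>)) dimvS ?addvSl // andbT.
apply: contra vU => /subvP; apply; have := memv_add (mem0v U) (memv_line v); by rewrite add0r.
Qed.

Lemma dimrV n : dim 'rV['F_2]_n = n.
Proof. by rewrite dim_matrix mul1r. Qed.

Lemma span4 n (W : {vspace 'rV['F_2]_n}) u v : (2 <= n)%N -> \dim W = (n - 2)%N ->
  u \notin W -> v \notin (W + <[u]>)%VS -> forall z,
  exists2 w, w \in W & exists a : 'F_2, exists b : 'F_2, z = w + a *: u + b *: v.
Proof.
move=> n2 dW uW vWu z.
have h1 := dim_lt_line uW; have h2 := dim_lt_line vWu.
have hf : (\dim (W + <[u]> + <[v]>) <= n)%N.
  by have := dimvS (subvf (W + <[u]> + <[v]>)); rewrite dimvf dimrV.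
have : (W + <[u]> + <[v]>)%VS == fullv.
  by rewrite eqEdim subvf dimvf dimrV /=; rewrite dW in h1; lia.
move/eqP => E; have : z \in fullv by exact: memvf.
rewrite -E => /memv_addP [y Hy [t Ht ->]]; case/memv_addP: Hy => [w Hw [s Hs ->]].
case/vlineP: Hs => a ->; case/vlineP: Ht => b ->.
by exists w => //; exists a, b.
Qed.

Lemma additive_lin n (g : 'rV['F_2]_n -> 'rV['F_2]_n) :
  (forall x y, g (x + y) = g x + g y) -> exists L : 'M['F_2]_n, forall x, g x = x *m L.
Proof.
move=> gD.
have g0 : g 0 = 0 by apply: (@addrI _ (g 0)); rewrite -gD !addr0.
have gZ : forall c x, g (c *: x) = c *: g x.
  by move=> c x; case: (F2cases c) => ->; rewrite ?scale0r ?scale1r.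
exists (\matrix_i g (delta_mx 0 i)) => x.
rewrite mulmx_sum_row {1}[x]row_sum_delta.
rewrite (big_morph g gD g0); apply: eq_bigr => i _; by rewrite gZ rowK.
Qed.

Ltac f2 := apply/rowP => ?; rewrite !mxE;
  repeat match goal with |- context [fun_of_matrix ?x ?a ?b] =>
    let t := fresh "t" in move: (fun_of_matrix x a b) => t end;
  repeat match goal with t : _ |- _ => let e := fresh "e" in case: (F2cases t) => e; rewrite e; clear e end;
  apply/eqP; by [].

Definition dd n (phi : {perm 'rV['F_2]_n}) x := phi x + x.

Section Main.
Variables (n : nat) (W : {vspace 'rV['F_2]_n}) (phi : {perm 'rV['F_2]_n}).
Hypotheses (n2 : (2 <= n)%N) (dimW : \dim W = (n - 2)%N) (phi2 : (phi * phi)%g = 1%g)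
  (cen : centralises_transl W phi)
  (nofix : forall x : 'rV['F_2]_n, phi @: wcoset W x != wcoset W x).

Local Notation d := (dd phi).

Lemma phiK x : phi (phi x) = x.
Proof. by rewrite -permM phi2 perm1. Qed.

Lemma phiE x : phi x = x + d x.
Proof. rewrite /dd; f2. Qed.

Lemma dW x w : w \in W -> d (x + w) = d x.
Proof. move=> Hw; rewrite /dd (cen Hw); f2. Qed.

Lemma dphi x : d (phi x) = d x.
Proof. rewrite /dd phiK; f2. Qed.

Lemma dnW x : d x \notin W.
Proof.
apply/negP => Hd; suff : phi @: wcoset W x == wcoset W x by rewrite (negbTE (nofix x)).
rewrite eqEcard card_imset ?leqnn ?andbT; last exact: perm_inj.
apply/subsetP => y /imsetP [z Hz ->]; rewrite inE in Hz; rewrite inE.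
have Ez : z = x + (z - x) by f2.
rewrite {1}Ez (cen Hz).
have -> : phi x + (z - x) - x = d x + (z - x) by rewrite /dd; f2.
exact: memvD.
Qed.

Lemma Hnotin u v : v \notin W -> u + v \notin W -> v \notin (W + <[u]>)%VS.
Proof.
move=> vW uvW; apply/negP => /memv_addP [w Hw [t /vlineP [c ->] E]].
case: (F2cases c) => Ec; rewrite Ec in E.
  have E' : v = w by rewrite E; f2.
  by move: vW; rewrite E' Hw.
have E' : u + v = w by rewrite E; f2.
by move: uvW; rewrite E' Hw.
Qed.

Lemma Claim x y : d x + d y \in W.
Proof.
apply: contraT => Hxy.
have sp := span4 n2 dimW (dnW x) (Hnotin (dnW y) Hxy).
have S1 : d (x + d y) + d x \in W.
  case: (sp (d (x + d y))) => w Hw [a [b E]].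
  case: (F2cases a) => Ea; case: (F2cases b) => Eb; rewrite Ea Eb in E.
  - have E' : d (x + d y) = w by rewrite E; f2.
    by move: (dnW (x + d y)); rewrite E' Hw.
  - have H1 : phi (x + d y) = x + w by rewrite phiE E; f2.
    have H2 : x + d y = phi x + w by rewrite -(cen Hw) -H1 phiK.
    have E' : d x + d y = (x + d y) + (x + d x) by f2.
    move: Hxy; rewrite E' H2 phiE.
    have -> : x + d x + w + (x + d x) = w by f2.
    by rewrite Hw.
  - have -> : d (x + d y) + d x = w by rewrite E; f2.
    exact: Hw.
  - have H1 : phi (x + d y) = phi (x + w).
      rewrite (cen Hw) [phi (x + d y)]phiE [phi x]phiE E; f2.
    have H2 := perm_inj H1.
    have E' : d y = (x + d y) + x by f2.
    have E2 : x + w + x = w by f2.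
    by move: (dnW y); rewrite E' H2 E2 Hw.
case: (sp (y + x)) => w Hw [a [b E]].
have Ey : y = (y + x) + x by f2.
rewrite E in Ey.
case: (F2cases a) => Ea; case: (F2cases b) => Eb; rewrite Ea Eb in Ey.
- have Edy : d y = d x.
    rewrite Ey; have -> : w + 0 *: d x + 0 *: d y + x = x + w by f2.
    exact: dW.
  have E2 : d x + d x = 0 by f2.
  by move: Hxy; rewrite Edy E2 mem0v.
- have Edy : d y = d (x + d y).
    rewrite {1}Ey; have -> : w + 0 *: d x + 1 *: d y + x = (x + d y) + w by f2.
    exact: dW.
  by move: Hxy; rewrite Edy addrC S1.
- have Edy : d y = d x.
    rewrite Ey; have -> : w + 1 *: d x + 0 *: d y + x = phi x + w by rewrite phiE; f2.
    by rewrite dW // dphi.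
  have E2 : d x + d x = 0 by f2.
  by move: Hxy; rewrite Edy E2 mem0v.
- have Edy : d y = d (x + d y).
    rewrite {1}Ey.
    have -> : w + 1 *: d x + 1 *: d y + x = phi (x + d y) + ((d (x + d y) + d x) + w).
      by rewrite phiE; f2.
    by rewrite dW ?dphi // memvD.
  by move: Hxy; rewrite Edy addrC S1.
Qed.

Local Notation U := (W + <[d 0%R]>)%VS.

Lemma Kd x z : z + x \in U -> d z = d x.
Proof.
case/memv_addP => w Hw [t /vlineP [c ->] E].
have Ez : z = (z + x) + x by f2.
rewrite Ez E; case: (F2cases c) => ->.
  have -> : w + 0 *: d 0 + x = x + w by f2.
  exact: dW.
have -> : w + 1 *: d 0 + x = phi x + ((d 0 + d x) + w) by rewrite phiE; f2.
by rewrite dW ?dphi // memvD ?Claim.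
Qed.

Lemma Hyper x y : x \notin U -> y \notin U -> x + y \in U.
Proof.
move=> xU yU.
case: (span4 n2 dimW (dnW 0) xU y) => w Hw [a [b E]].
have Hin : w + a *: d 0 \in U.
  by apply: memv_add => //; apply: memvZ; exact: memv_line.
case: (F2cases b) => Eb; rewrite Eb in E.
  have E' : y = w + a *: d 0 by rewrite E; f2.
  by move: yU; rewrite E' Hin.
have -> : x + y = w + a *: d 0 by rewrite E; f2.
exact: Hin.
Qed.

Lemma addd x y : d (x + y) + d 0 = d x + d y.
Proof.
case: (boolP (x \in U)) => xU.
  have h1 : d x = d 0 by apply: Kd; rewrite addr0.
  have h2 : d (x + y) = d y by apply: Kd; have -> : x + y + y = x by f2.
  rewrite h1 h2; f2.
case: (boolP (y \in U)) => yU.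
  have h1 : d y = d 0 by apply: Kd; rewrite addr0.
  have h2 : d (x + y) = d x by apply: Kd; have -> : x + y + x = y by f2.
  rewrite h1 h2; f2.
have h1 : d (x + y) = d 0 by apply: Kd; rewrite addr0 Hyper.
have h2 : d y = d x by apply: Kd; rewrite addrC Hyper.
rewrite h1 h2; f2.
Qed.

Lemma phiAGL : in_AGL phi.
Proof.
pose g x := phi x + phi 0.
have gD : forall x y, g (x + y) = g x + g y.
  move=> x y; rewrite /g !phiE.
  have -> : d (x + y) = d x + d y + d 0 by rewrite -addd; f2.
  f2.
have [L HL] := additive_lin gD.
exists L, (phi 0); split; last by move=> x; rewrite -HL /g; f2.
have gg : forall x, g (g x) = x.
  move=> x; rewrite gD /g !phiK; f2.
have LL : L *m L = 1%:M.
  apply/row_matrixP => i; rewrite !rowE mulmxA -!HL gg mulmx1 //.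
by case: (mulmx1_unit LL).
Qed.

End Main.

Theorem mainTheorem6 (n : nat) (W : {vspace 'rV['F_2]_n})
  (phi : {perm 'rV['F_2]_n}) :
  (2 < n)%N ->
  \dim W = (n - 2)%N ->
  (phi * phi)%g = 1%g -> phi != 1%g ->
  centralises_transl W phi ->
  (forall x : 'rV['F_2]_n, phi @: wcoset W x != wcoset W x) ->
  in_AGL phi.
Proof.
move=> n2 dW p2 _ cen nf.
exact: (phiAGL (ltnW n2) dW p2 cen nf).
Qed.
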